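(* Let $A$ and $B$ be $(0,1)$ matrices with $A\neq B$, and let $k=\mathrm{rank}(A-B)$. Then the following are equivalent: (i) $A,B$ are Gram mates and $(A+B)(A-B)^T=0$. (ii) $A,B$ are Gram mates and $(A-B)^T(A+B)=0$. (iii) $B$ is obtained from $A$ by changing the signs of $k$ positive singular values (these $k$ positive singular values being the same as those of $\frac12(A-B)$). (iv) There exist $k$ right singular vectors $\mathbf v_1,\dots,\mathbf v_k$ of $A$ corresponding to positive singular values which form a basis of $\mathrm{Row}(A-B)$ and satisfy $(A+B)\mathbf v_i=0$ for all $i$ (these can be obtained from right singular vectors corresponding to the positive singular values of $\frac12(A-B)$). (v) There exist $k$ left singular vectors $\mathbf u_1,\dots,\mathbf u_k$ of $A$ corresponding to positive singular values which form a basis of $\mathrm{Col}(A-B)$ and satisfy $(A+B)^T\mathbf u_i=0$ for all $i$ (these can be obtained from left singular vectors corresponding to the positive singular values of $\frac12(A-B)$). (vi) $A,B$ are Gram mates and $A(A-B)^T$ is symmetric. (vii) $A,B$ are Gram mates and $A^T(A-B)$ is symmetric.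
   Context: Two $(0,1)$ matrices $A,B$ are Gram mates if $AA^T=BB^T$, $A^TA=B^TB$ and $A\neq B$. For an $m\times n$ real matrix $A$, ''$B$ is obtained from $A$ by changing the signs of $k$ positive singular values'' means: there are orthogonal $U$, $V$ and a rectangular diagonal $\Sigma$ with nonnegative diagonal entries with $A=U\Sigma V^T$, and a diagonal matrix $S$ with entries $\pm1$, exactly $k$ of them $-1$, each in a position $i$ with $\Sigma_{ii}>0$, such that $B=US\Sigma V^T$. *)

(* Defs.v *)
From HB Require Import structures.
From mathcomp Require Import all_boot all_order all_algebra.
From mathcomp Require Import all_classical all_reals.
Set Implicit Arguments. Unset Strict Implicit. Unset Printing Implicit Defensive.
Import Order.TTheory GRing.Theory Num.Theory.
Local Open Scope ring_scope.

Definition zero_one_mx (R : realType) m n (A : 'M[R]_(m, n)) : Prop :=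
  forall i j, A i j = 0 \/ A i j = 1.

Definition gram_mates (R : realType) m n (A B : 'M[R]_(m, n)) : Prop :=
  [/\ A *m A^T = B *m B^T, A^T *m A = B^T *m B & A <> B].

Definition orthogonal_mx (R : realType) n (U : 'M[R]_n) : Prop :=
  U^T *m U = 1%:M.

Definition rect_diag_nonneg (R : realType) m n (S : 'M[R]_(m, n)) : Prop :=
  (forall (i : 'I_m) (j : 'I_n), (i : nat) <> j -> S i j = 0) /\
  (forall (i : 'I_m) (j : 'I_n), (i : nat) = j -> 0 <= S i j).

Definition sign_diag_mx (R : realType) m (S : 'M[R]_m) : Prop :=
  (forall i j : 'I_m, i <> j -> S i j = 0) /\
  (forall i : 'I_m, S i i = 1 \/ S i i = -1).

(* "B is obtained from A by changing the signs of k positive singular values":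
   A = U Sig V^T, B = U S Sig V^T with U, V orthogonal, Sig rectangular
   diagonal nonnegative, S diagonal +-1 with exactly k entries -1, each at a
   position i with Sig_ii > 0. *)
Definition sign_change_sv (R : realType) m n (k : nat) (A B : 'M[R]_(m, n)) : Prop :=
  exists (U : 'M[R]_m) (V : 'M[R]_n) (Sig : 'M[R]_(m, n)) (S : 'M[R]_m),
    [/\ orthogonal_mx U, orthogonal_mx V, rect_diag_nonneg Sig &
        A = U *m Sig *m V^T] /\
    [/\ sign_diag_mx S, #|[set i : 'I_m | S i i == -1]| = k,
        (forall i : 'I_m, S i i = -1 ->
            exists2 j : 'I_n, (j : nat) = i & 0 < Sig i j) &
        B = U *m S *m Sig *m V^T].

Definition right_sing_vec_pos (R : realType) m n (A : 'M[R]_(m, n)) (v : 'cV[R]_n) : Prop :=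
  exists (sigma : R) (u : 'cV[R]_m),
    [/\ 0 < sigma, A *m v = sigma *: u, A^T *m u = sigma *: v,
        v^T *m v = 1%:M & u^T *m u = 1%:M].

Definition left_sing_vec_pos (R : realType) m n (A : 'M[R]_(m, n)) (u : 'cV[R]_m) : Prop :=
  exists (sigma : R) (v : 'cV[R]_n),
    [/\ 0 < sigma, A *m v = sigma *: u, A^T *m u = sigma *: v,
        v^T *m v = 1%:M & u^T *m u = 1%:M].

(* Main.v *)
Require Import Defs.
From HB Require Import structures.
From mathcomp Require Import all_boot all_order all_algebra.
From mathcomp Require Import all_classical all_reals.
From mathcomp Require Import complex ring lra.
Import Order.TTheory GRing.Theory Num.Theory.
Local Open Scope ring_scope.

Set Implicit Arguments. Unset Strict Implicit. Unset Printing Implicit Defensive.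
Lemma real_sym_eig (R : realType) n (G : 'M[R]_n) : G^T = G -> G != 0 ->
  exists2 a : R, a != 0 & eigenvalue G a.
Proof.
move=> Gs Gn0.
pose Gc : 'M[R[i]]_n := map_mx (real_complex R) G.
have herm : Gc \is hermsymmx.
  apply/is_hermitianmxP; rewrite expr0 scale1r.
  rewrite /Gc map_trmx Gs -map_mx_comp; apply/matrixP => i j; rewrite !mxE /=.
  by rewrite conj_Creal //; apply/complex_realP; eexists.
have hreal := hermitian_spectral_diag_real herm.
have /orthomx_spectralP Geq := hermitian_normalmx herm.
set P := spectralmx Gc in Geq; set d := spectral_diag Gc in hreal Geq.
have Pu : P \in unitmx := spectral_unit Gc.
have [j dj] : exists j, d 0 j != 0.
  apply/existsP; apply: contraT; rewrite negb_exists => /forallP d0.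
  suff : Gc = 0.
    move=> Gc0; suff G0 : G = 0 by rewrite G0 eqxx in Gn0.
    apply/matrixP => i k; have := congr1 (fun M : 'M_n => M i k) Gc0.
    by rewrite !mxE => -[].
  rewrite Geq; suff -> : diag_mx d = 0 by rewrite mulmx0 mul0mx.
  apply/matrixP => i k; rewrite !mxE; move: (d0 k); have [->|] := eqVneq i k; last by rewrite mulr0n. by rewrite negbK mulr1n => /eqP.
have dreal : d 0 j \is Num.real by have /mxOverP := hreal; apply.
exists (complex.Re (d 0 j)).
  apply: contra dj => /eqP h; rewrite -(RRe_real dreal) h //.
have ev : eigenvalue Gc (d 0 j).
  apply/eigenvalueP; exists (row j P).
    have : P *m Gc = diag_mx d *m P by rewrite Geq !mulmxA mulmxV // mul1mx.
    move=> /(congr1 (row j)); rewrite -!row_mul => ->.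
    by rewrite row_mul row_diag_mx -(scalemxAl (d 0 j) _ P) -rowE.
  apply/eqP => h; have := congr1 (row j) (mulmxV Pu).
  rewrite row_mul h mul0mx => /rowP /(_ j); rewrite !mxE eqxx /= => /eqP.
  by rewrite eq_sym oner_eq0.
rewrite eigenvalue_root_char -map_char_poly in ev.
rewrite eigenvalue_root_char; move: ev; rewrite -(RRe_real dreal) /root horner_map /=.
by move=> /eqP [->].
Qed.

Section Lib.
Variable R : realType.

Lemma trZ m n a (A : 'M[R]_(m,n)) : (a *: A)^T = a *: A^T.
Proof. by apply/matrixP => i j; rewrite !mxE. Qed.
Lemma trD m n (A B : 'M[R]_(m,n)) : (A + B)^T = A^T + B^T.
Proof. by apply/matrixP => i j; rewrite !mxE. Qed.
Lemma trB m n (A B : 'M[R]_(m,n)) : (A - B)^T = A^T - B^T.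
Proof. by apply/matrixP => i j; rewrite !mxE. Qed.
Lemma trN m n (A : 'M[R]_(m,n)) : (- A)^T = - A^T.
Proof. by apply/matrixP => i j; rewrite !mxE. Qed.

Lemma mxtmx_ii m n (M : 'M[R]_(m,n)) i : (M *m M^T) i i = \sum_j M i j ^+ 2.
Proof. by rewrite mxE; apply: eq_bigr => j _; rewrite mxE expr2. Qed.

Lemma mxtmx_eq0 m n (M : 'M[R]_(m,n)) : M *m M^T = 0 -> M = 0.
Proof.
move=> h; apply/matrixP => i j; rewrite mxE.
have := mxtmx_ii M i; rewrite h mxE => /esym/eqP.
rewrite psumr_eq0 => [/allP /(_ j) |j' _]; last exact: sqr_ge0.
by rewrite mem_index_enum /= sqrf_eq0 => /(_ isT) /eqP.
Qed.

Lemma tmxm_eq0 m n (M : 'M[R]_(m,n)) : M^T *m M = 0 -> M = 0.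
Proof.
by move=> h; apply: trmx_inj; rewrite trmx0; apply: mxtmx_eq0; rewrite trmxK.
Qed.

Lemma mxtmx_ge0 m n (M : 'M[R]_(m,n)) i : 0 <= (M *m M^T) i i.
Proof. by rewrite mxtmx_ii; apply: sumr_ge0 => j _; exact: sqr_ge0. Qed.

End Lib.

Lemma sym_eigvec (R : realType) n (G : 'M[R]_n) : G^T = G -> G != 0 ->
  exists a : R, exists w : 'cV[R]_n, [/\ a != 0, G *m w = a *: w & w^T *m w = 1%:M].
Proof.
move=> Gs Gn0; have [a a0 /eigenvalueP [v vG v0]] := real_sym_eig Gs Gn0.
pose t := (v *m v^T) 0 0.
have t0 : 0 < t.
  rewrite lt_def mxtmx_ge0 andbT; apply: contra v0 => /eqP t0.
  apply/eqP/mxtmx_eq0; rewrite [LHS]mx11_scalar -/t t0; apply/matrixP => i j.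
  by rewrite !mxE mul0rn.
have st0 : 0 < Num.sqrt t by rewrite sqrtr_gt0.
exists a, ((Num.sqrt t)^-1 *: v^T); split => //.
  rewrite -scalemxAr -[G]Gs -trmx_mul vG trZ scalerA mulrC -scalerA.
  by [].
rewrite trZ trmxK. rewrite -scalemxAl -scalemxAr scalerA [v *m v^T]mx11_scalar -/t.
rewrite -invfM -expr2 sqr_sqrtr ?ltW // scale_scalar_mx mulVf //.
by rewrite gt_eqF.
Qed.

Definition svd_spec (R : realType) m n (M : 'M[R]_(m,n)) r
  (U : 'M[R]_(m,r)) (V : 'M[R]_(n,r)) (d : 'rV[R]_r) :=
  [/\ U^T *m U = 1%:M, V^T *m V = 1%:M, (forall i, 0 < d 0 i) &
      M = U *m diag_mx d *m V^T].

Lemma svd_zero (R : realType) m n (M : 'M[R]_(m,n)) : M = 0 ->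
  svd_spec M (0 : 'M_(m,0)) 0 0.
Proof.
move=> ->; split; [by apply/matrixP => -[]..| by move=> [] | ].
by rewrite mul0mx mul0mx.
Qed.

Lemma svd (R : realType) m n (M : 'M[R]_(m,n)) :
  exists r, exists U, exists V, exists d, @svd_spec R m n M r U V d.
Proof.
move: {2}(\rank M) (leqnn (\rank M)) => k; elim: k M => [|k IH] M hk.
  exists 0%N, 0, 0, 0; apply: svd_zero; apply/eqP; rewrite -mxrank_eq0.
  by rewrite -leqn0.
have [M0|Mn0] := eqVneq M 0; first by exists 0%N, 0, 0, 0; apply: svd_zero.
pose G := M^T *m M.
have Gs : G^T = G by rewrite /G trmx_mul trmxK.
have Gn0 : G != 0 by apply: contra Mn0 => /eqP /tmxm_eq0 ->.
have [a [w [a0 Gw ww]]] := sym_eigvec Gs Gn0.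
have Mw2 : (M *m w)^T *m (M *m w) = a%:M.
  by rewrite trmx_mul -mulmxA (mulmxA M^T) -/G Gw -scalemxAr ww scale_scalar_mx mulr1.
have apos : 0 < a.
  rewrite lt_def a0 /=; have := mxtmx_ge0 (M *m w)^T 0; rewrite trmxK Mw2 mxE.
  by rewrite eqxx mulr1n.
pose s := Num.sqrt a.
have s0 : 0 < s by rewrite sqrtr_gt0.
have s2 : s * s = a by rewrite -expr2 sqr_sqrtr ?ltW.
pose u := s^-1 *: (M *m w).
have uu : u^T *m u = 1%:M.
  rewrite /u trZ -scalemxAl -scalemxAr scalerA Mw2 scale_scalar_mx -invfM s2.
  by rewrite mulVf.
have Mtu : M^T *m u = s *: w.
  rewrite /u -scalemxAr mulmxA -/G. rewrite Gw scalerA -s2 mulrA mulVf ?gt_eqF // mul1r.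
  by [].
have Mw : M *m w = s *: u by rewrite /u scalerA mulfV ?gt_eqF // scale1r.
pose M' := M - s *: (u *m w^T).
have M'w : M' *m w = 0.
  by rewrite /M' mulmxBl -scalemxAl -mulmxA ww mulmx1 Mw subrr.
have uM' : u^T *m M' = 0.
  rewrite /M' mulmxBr -scalemxAr mulmxA uu mul1mx.
  have -> : u^T *m M = s *: w^T by rewrite -[u^T *m M]trmxK trmx_mul trmxK Mtu trZ.
  by rewrite subrr.
have M'E : M' = (1%:M - u *m u^T) *m M.
  rewrite mulmxBl mul1mx -mulmxA.
  have -> : u^T *m M = s *: w^T by rewrite -[u^T *m M]trmxK trmx_mul trmxK Mtu trZ.
  by rewrite -scalemxAr.
have ltM : (M' < M)%MS.
  rewrite ltmxE {1}M'E submxMl /=; apply/negP => sMM'.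
  have wM : (w^T <= M)%MS.
    apply/submxP; exists (a^-1 *: (M *m w)^T).
    rewrite -scalemxAl trmx_mul -mulmxA -/G.
    have wG : w^T *m G = a *: w^T by rewrite -[w^T *m G]trmxK trmx_mul trmxK Gs Gw trZ.
    rewrite wG scalerA mulVf //.
    by rewrite scale1r.
  have /submxP [X hX] := submx_trans wM sMM'.
  have : w^T *m w = 0 by rewrite hX -mulmxA M'w mulmx0.
  rewrite ww => /matrixP /(_ 0 0); rewrite !mxE /= => /eqP; by rewrite oner_eq0.
have hk' : (\rank M' <= k)%N.
  by move: ltM; rewrite ltmxErank => /andP [_ h]; rewrite -ltnS (leq_trans h).
have [r' [U' [V' [d' [U'U V'V d'pos M'eq]]]]] := IH M' hk'.
have uU' : u^T *m U' = 0.
  have : u^T *m M' *m V' = 0 by rewrite uM' mul0mx.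
  rewrite M'eq !mulmxA -(mulmxA _ V'^T) V'V mulmx1.
  move=> /matrixP h; apply/matrixP => i j; have := h i j.
  rewrite mul_mx_diag !mxE => /eqP; rewrite mulf_eq0 (gt_eqF (d'pos j)) orbF.
  by move/eqP.
have wV' : w^T *m V' = 0.
  have : w^T *m M'^T *m U' = 0 by rewrite -trmx_mul M'w trmx0 mul0mx.
  rewrite M'eq !trmx_mul trmxK !mulmxA -(mulmxA _ U'^T) U'U mulmx1 tr_diag_mx.
  move=> /matrixP h; apply/matrixP => i j; have := h i j.
  rewrite mul_mx_diag !mxE => /eqP; rewrite mulf_eq0 (gt_eqF (d'pos j)) orbF.
  by move/eqP.
exists (1 + r')%N, (row_mx u U'), (row_mx w V'), (row_mx (s%:M) d'); split.
- rewrite tr_row_mx mul_col_row uu uU' U'U -[U'^T *m u]trmxK trmx_mul trmxK uU' trmx0.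
  by rewrite -scalar_mx_block.
- rewrite tr_row_mx mul_col_row ww wV' V'V -[V'^T *m w]trmxK trmx_mul trmxK wV' trmx0.
  by rewrite -scalar_mx_block.
- move=> i; rewrite mxE; case: splitP => j _; rewrite ?mxE //.
  by rewrite ord1 eqxx mulr1n.
- rewrite diag_mx_row mul_row_block !mulmx0 addr0 add0r tr_row_mx mul_row_col.
  rewrite -M'eq.
  have -> : diag_mx (s%:M : 'rV_1) = s%:M.
    by apply/matrixP => i j; rewrite !ord1 !mxE.
  by rewrite mul_mx_scalar -scalemxAl /M' addrC subrK.
Qed.

Definition Jmx (R : realType) m p : 'M[R]_(m,p) := \matrix_(i, j) ((i : nat) == j)%:R.

Lemma svd_orth_left (R : realType) m n p r (X : 'M[R]_(p, m)) (M : 'M[R]_(m,n))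
   (U : 'M_(m,r)) V d : svd_spec M U V d -> X *m M = 0 -> X *m U = 0.
Proof.
move=> [UU VV dpos ->] h.
have : X *m (U *m diag_mx d *m V^T) *m V = 0 by rewrite h mul0mx.
rewrite !mulmxA -(mulmxA _ V^T) VV mulmx1.
move=> /matrixP h'; apply/matrixP => i j; have := h' i j.
rewrite mul_mx_diag !mxE => /eqP; rewrite mulf_eq0 (gt_eqF (dpos j)) orbF.
by move/eqP.
Qed.

Lemma svd_tr (R : realType) m n r (M : 'M[R]_(m,n)) (U : 'M_(m,r)) V d :
  svd_spec M U V d -> svd_spec M^T V U d.
Proof.
move=> [UU VV dpos ->]; split => //.
by rewrite !trmx_mul trmxK tr_diag_mx mulmxA.
Qed.

Lemma orth_row_mx (R : realType) m p r (Q : 'M[R]_(m,p)) (U : 'M[R]_(m,r)) :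
  Q^T *m Q = 1%:M -> U^T *m U = 1%:M -> Q^T *m U = 0 ->
  (row_mx Q U)^T *m row_mx Q U = 1%:M.
Proof.
move=> QQ UU QU.
rewrite tr_row_mx mul_col_row QQ UU QU -[U^T *m Q]trmxK trmx_mul trmxK QU trmx0.
by rewrite -scalar_mx_block.
Qed.

Lemma complete_orth (R : realType) m p (Q : 'M[R]_(m,p)) : Q^T *m Q = 1%:M ->
  exists U : 'M[R]_m, U^T *m U = 1%:M /\ U^T *m Q = Jmx R m p.
Proof.
move=> QQ; pose P := 1%:M - Q *m Q^T.
have [r [U2 [V2 [d hs]]]] := svd P.
have QP : Q^T *m P = 0 by rewrite /P mulmxBr mulmx1 mulmxA QQ mul1mx subrr.
have QU2 := svd_orth_left hs QP.
have Uo : (row_mx Q U2)^T *m row_mx Q U2 = 1%:M by case: hs => UU _ _ _; exact: orth_row_mx.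
have e : (p + r)%N = m.
  apply/eqP; rewrite eqn_leq; apply/andP; split.
    have := mxrankM_maxr (row_mx Q U2)^T (row_mx Q U2); rewrite Uo mxrank1 => h.
    exact: leq_trans h (rank_leq_row _).
  have : (1%:M : 'M[R]_m) = P + Q *m Q^T by rewrite /P subrK.
  move=> /(congr1 mxrank); rewrite mxrank1 => ->.
  apply: leq_trans (mxrank_add _ _) _; rewrite addnC leq_add //.
    exact: leq_trans (mxrankM_maxl _ _) (rank_leq_col _).
  case: hs => _ _ _ ->; rewrite -mulmxA.
  exact: leq_trans (mxrankM_maxl _ _) (rank_leq_col _).
subst m; exists (row_mx Q U2); split => //.
rewrite tr_row_mx mul_col_mx QQ -[U2^T *m Q]trmxK trmx_mul trmxK QU2 trmx0.
apply/matrixP => i j; rewrite !mxE; case: splitP => k ->; rewrite !mxE //.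
by rewrite eqn_leq leqNgt (leq_trans (ltn_ord j) (leq_addr _ _)).
Qed.

Definition Cond (R : realType) m n (A B : 'M[R]_(m,n)) :=
  (A + B) *m (A - B)^T = 0 /\ (A + B)^T *m (A - B) = 0.

Section Alg.
Variable R : realType.

Lemma twice0 p q (X : 'M[R]_(p,q)) : X *+ 2 = 0 -> X = 0.
Proof.
move=> /matrixP h; apply/matrixP => i j; have := h i j; rewrite !mxE.
by move=> e; lra.
Qed.

Lemma core p (X : 'M[R]_p) : X^T = -X -> X *m X = 0 -> X = 0.
Proof. by move=> XT XX; apply: tmxm_eq0; rewrite XT mulNmx XX oppr0. Qed.

Variables m n : nat.
Implicit Types A B : 'M[R]_(m,n).

Lemma I1 A B : (A + B) *m (A - B)^T + (A - B) *m (A + B)^T =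
  (A *m A^T - B *m B^T) *+ 2.
Proof.
apply/matrixP => i j; rewrite !mxE -?sumrB -?big_split -?sumrB /=.
by apply: eq_bigr => k _; rewrite !mxE; ring.
Qed.

Lemma I2 A B : (A + B)^T *m (A - B) + (A - B)^T *m (A + B) =
  (A^T *m A - B^T *m B) *+ 2.
Proof.
apply/matrixP => i j; rewrite !mxE -?sumrB -?big_split -?sumrB /=.
by apply: eq_bigr => k _; rewrite !mxE; ring.
Qed.

Lemma I3 A B : (A + B) *m (A - B)^T =
  (A *m (A - B)^T) *+ 2 - (A - B) *m (A - B)^T.
Proof.
apply/matrixP => i j; rewrite !mxE -?sumrB -?big_split -?sumrB /=.
by apply: eq_bigr => k _; rewrite !mxE; ring.
Qed.

Lemma i_to_cond A B : gram_mates A B -> (A + B) *m (A - B)^T = 0 -> Cond A B.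
Proof.
move=> [g1 g2 _] h; split => //.
have e2 := I2 A B; rewrite g2 subrr mul0rn in e2.
have XT : ((A + B)^T *m (A - B))^T = - ((A + B)^T *m (A - B)).
  by rewrite trmx_mul trmxK; apply/eqP; rewrite -addr_eq0 addrC e2.
apply: (core XT); rewrite mulmxA -(mulmxA _ (A - B)).
have -> : (A - B) *m (A + B)^T = 0 by have := congr1 trmx h; rewrite trmx_mul trmxK trmx0.
by rewrite mulmx0 mul0mx.
Qed.

Lemma cond_to_gram A B : A <> B -> Cond A B -> gram_mates A B.
Proof.
move=> AB [h1 h2]; split => //.
  apply/eqP; rewrite -subr_eq0; apply/eqP/twice0; rewrite -I1 h1 add0r.
  by have := congr1 trmx h1; rewrite trmx_mul trmxK trmx0.
apply/eqP; rewrite -subr_eq0; apply/eqP/twice0; rewrite -I2 h2 add0r.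
by have := congr1 trmx h2; rewrite trmx_mul trmxK trmx0.
Qed.

Lemma vi_to_cond A B : gram_mates A B ->
  (A *m (A - B)^T)^T = A *m (A - B)^T -> Cond A B.
Proof.
move=> g h; apply: i_to_cond => //; case: g => g1 _ _.
have e1 := I1 A B; rewrite g1 subrr mul0rn in e1.
set X := (A + B) *m (A - B)^T in e1 *.
have XT : X^T = X.
  rewrite /X I3; set Y := A *m (A - B)^T; set Z := (A - B) *m (A - B)^T.
  have ZT : Z^T = Z by rewrite /Z trmx_mul trmxK.
  have -> : (Y *+ 2 - Z)^T = Y^T *+ 2 - Z^T.
    by apply/matrixP => i j; rewrite !mxE.
  by rewrite h ZT.
have XT' : X^T = - X.
  rewrite /X trmx_mul trmxK; apply/eqP; rewrite -addr_eq0 addrC; exact/eqP.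
apply: twice0; rewrite mulr2n; rewrite -{2}XT XT' subrr //.
Qed.

Lemma cond_to_vi A B : Cond A B ->
  (A *m (A - B)^T)^T = A *m (A - B)^T.
Proof.
move=> [h1 _]; have := I3 A B; rewrite h1 => /eqP; rewrite eq_sym subr_eq0.
move=> /eqP e; apply/eqP; rewrite -subr_eq0; apply/eqP/twice0.
rewrite mulrnBl.
have -> : (A *m (A - B)^T)^T *+ 2 = ((A *m (A - B)^T) *+ 2)^T.
  by apply/matrixP => i j; rewrite !mxE.
by rewrite e trmx_mul trmxK subrr.
Qed.

End Alg.

Lemma cond_tr (R : realType) m n (A B : 'M[R]_(m,n)) : Cond A^T B^T <-> Cond A B.
Proof.
rewrite /Cond -!trD -!trB !trmxK; split => -[h1 h2]; split => //.
Qed.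

Lemma gram_tr (R : realType) m n (A B : 'M[R]_(m,n)) :
  gram_mates A^T B^T <-> gram_mates A B.
Proof.
rewrite /gram_mates !trmxK; split => -[h1 h2 h3]; split => //.
by move=> e; apply: h3; rewrite e.
by move=> e; apply: h3; apply: trmx_inj.
Qed.

Section Vec.
Variable R : realType.

Lemma colM m n p (A : 'M[R]_(m,n)) (B : 'M[R]_(n,p)) i :
  col i (A *m B) = A *m col i B.
Proof. by apply/matrixP => a b; rewrite !mxE; apply: eq_bigr => k _; rewrite !mxE. Qed.

Lemma col_diag m r (U : 'M[R]_(m,r)) d i : col i (U *m diag_mx d) = d 0 i *: col i U.
Proof. by apply/matrixP => a b; rewrite [LHS]mxE mul_mx_diag !mxE mulrC. Qed.

Lemma col_unit n r (V : 'M[R]_(n,r)) i : V^T *m V = 1%:M -> (col i V)^T *m col i V = 1%:M.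
Proof.
move=> VV; rewrite tr_col rowE colE mulmxA -(mulmxA _ V^T) VV mulmx1 mul_delta_mx.
by apply/matrixP => a b; rewrite !ord1 !mxE.
Qed.

Lemma svd_rank m n r (M : 'M[R]_(m,n)) U V d : @svd_spec R m n M r U V d -> \rank M = r.
Proof.
move=> [UU VV dpos Me]; apply/eqP; rewrite eqn_leq; apply/andP; split.
  by rewrite Me -mulmxA; exact: leq_trans (mxrankM_maxl _ _) (rank_leq_col _).
pose Di := diag_mx (\row_i (d 0 i)^-1).
have : U^T *m M *m V *m Di = 1%:M.
  rewrite Me !mulmxA UU mul1mx -(mulmxA _ V^T) VV mulmx1.
  apply/matrixP => i j; rewrite mul_diag_mx !mxE.
  case: (eqVneq i j) => [->|]; rewrite ?mulr1n ?mulr0n ?mulr0 //.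
  by rewrite mulfV // gt_eqF.
move=> /(congr1 mxrank); rewrite mxrank1 => <-.
apply: leq_trans (mxrankM_maxl _ _) _; apply: leq_trans (mxrankM_maxl _ _) _.
exact: mxrankM_maxr.
Qed.

Lemma svd_V_sub m n r (M : 'M[R]_(m,n)) U V d : @svd_spec R m n M r U V d ->
  (V^T <= M)%MS.
Proof.
move=> [UU VV dpos Me]; apply/submxP.
exists (diag_mx (\row_i (d 0 i)^-1) *m U^T).
rewrite Me !mulmxA -(mulmxA _ U^T) UU mulmx1.
have -> : diag_mx (\row_i (d 0 i)^-1) *m diag_mx d = 1%:M.
  apply/matrixP => i j; rewrite mul_diag_mx !mxE.
  case: (eqVneq i j) => [->|]; rewrite ?mulr1n ?mulr0n ?mulr0 //.
  by rewrite mulVf // gt_eqF.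
by rewrite mul1mx.
Qed.

End Vec.

Definition iv_prop (R : realType) m n (A B : 'M[R]_(m,n)) k :=
   exists W : 'M[R]_(k, n),
     [/\ (forall i, right_sing_vec_pos A (row i W)^T),
         row_free W, (W == A - B)%MS &
         (forall i, (A + B) *m (row i W)^T = 0)].

Definition v_prop (R : realType) m n (A B : 'M[R]_(m,n)) k :=
   exists W : 'M[R]_(k, m),
     [/\ (forall i, left_sing_vec_pos A (row i W)^T),
         row_free W, (W == (A - B)^T)%MS &
         (forall i, (A + B)^T *m (row i W)^T = 0)].

Lemma v_iv (R : realType) m n (A B : 'M[R]_(m,n)) k :
  iv_prop A^T B^T k -> v_prop A B k.
Proof.
move=> [W [h1 h2 h3 h4]]; exists W; split => //.
- move=> i; have [s [v [s0 e1 e2 e3 e4]]] := h1 i; exists s, v; split => //.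
  by rewrite trmxK in e2.
- by rewrite trB.
- by move=> i; rewrite trD.
Qed.

Lemma EC_iv (R : realType) m n (A B E C : 'M[R]_(m,n)) :
  A = E + C -> B = E - C -> E *m C^T = 0 -> E^T *m C = 0 ->
  iv_prop A B (\rank (A - B)).
Proof.
move=> hA hB EC ETC.
have [r [U [V [d hs]]]] := svd C.
have D2 : A - B = 2%:R *: C by rewrite hA hB; apply/matrixP => i j; rewrite !mxE; ring.
have S2 : A + B = 2%:R *: E by rewrite hA hB; apply/matrixP => i j; rewrite !mxE; ring.
have n20 : (2%:R : R) != 0 by rewrite pnatr_eq0.
have rk : \rank (A - B) = r by rewrite D2 mxrank_scale_nz // (svd_rank hs).
rewrite rk.
have EV : E *m V = 0 by apply: (svd_orth_left (svd_tr hs)).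
have ETU : E^T *m U = 0 by apply: (svd_orth_left hs).
case: (hs) => UU VV dpos Ce.
have CV : C *m V = U *m diag_mx d by rewrite Ce -mulmxA VV mulmx1.
have CTU : C^T *m U = V *m diag_mx d.
  by rewrite Ce !trmx_mul trmxK tr_diag_mx !mulmxA -(mulmxA _ U^T) UU mulmx1.
exists V^T; split.
- move=> i; rewrite tr_row trmxK; exists (d 0 i), (col i U); split => //.
  + by rewrite hA mulmxDl -!colM EV CV col_diag col0 add0r.
  + by rewrite hA trD mulmxDl -!colM ETU CTU col_diag col0 add0r.
  + exact: col_unit.
  + exact: col_unit.
- by apply/row_freeP; exists V.
- rewrite D2; apply/andP; split.
    by rewrite (eqmx_scale _ n20); exact: (svd_V_sub hs).
  by rewrite (eqmx_scale _ n20) Ce submxMl.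
- by move=> i; rewrite tr_row trmxK S2 -scalemxAl -colM EV col0 scaler0.
Qed.

Lemma iv_to_cond (R : realType) m n (A B : 'M[R]_(m,n)) k :
  iv_prop A B k -> Cond A B.
Proof.
move=> [W [hsing rf hW hS]].
set S := A + B; set D := A - B.
have SW : S *m W^T = 0.
  apply/matrixP => a i.
  have -> : (S *m W^T) a i = (S *m (row i W)^T) a 0.
    by rewrite !mxE; apply: eq_bigr => j _; rewrite !mxE.
  by rewrite hS !mxE.
have /andP [sWD sDW] := hW.
have [X hX] := submxP sDW.
have SDT : S *m D^T = 0 by rewrite /D hX trmx_mul mulmxA SW mul0mx.
split => //.
have SDW : S^T *m D *m W^T = 0.
  apply/matrixP => a i.
  have -> : (S^T *m D *m W^T) a i = (S^T *m (D *m (row i W)^T)) a 0.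
    by rewrite mulmxA !mxE; apply: eq_bigr => j _; rewrite !mxE.
  set w := (row i W)^T.
  have [s [u [s0 Aw ATu ww uu]]] := hsing i.
  have Sw : S *m w = 0 := hS i.
  have Bw : B *m w = - (A *m w).
    by apply/eqP; rewrite -addr_eq0; move: Sw; rewrite /S mulmxDl addrC => ->.
  have Dw : D *m w = 2%:R *: (A *m w).
    by rewrite /D mulmxBl Bw opprK scaler_nat mulr2n.
  have ST : S^T = 2%:R *: A^T - D^T.
    by apply/matrixP => x y; rewrite /S /D !mxE; ring.
  have [x hx] := submxP (submx_trans (row_sub i W) sWD).
  have wD : w = D^T *m x^T by rewrite /w hx trmx_mul.
  set z := S^T *m (D *m w).
  have zE : z = D^T *m ((2%:R * 2%:R * s * s) *: x^T - D *m w).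
    rewrite /z ST mulmxBl mulmxBr -scalemxAr -wD; congr (_ - _).
    rewrite Dw -scalemxAl -scalemxAr Aw -scalemxAr ATu !scalerA.
    by congr (_ *: _); ring.
  have zz : z^T *m z = 0.
    rewrite {2}zE /z trmx_mul trmxK mulmxA -(mulmxA _ S) SDT mulmx0 mul0mx.
    by [].
  have z0 := tmxm_eq0 zz.
  by rewrite -/z z0 !mxE.
have SDD : S^T *m D *m D^T = 0 by rewrite {2}/D hX trmx_mul mulmxA SDW mul0mx.
apply: mxtmx_eq0; rewrite trmx_mul trmxK mulmxA SDD mul0mx //.
Qed.

Section III.
Variable R : realType.

Lemma prod_form1 m n (U : 'M[R]_m) (V : 'M[R]_n) (X Y : 'M[R]_(m,n)) :
  V^T *m V = 1%:M -> (U *m X *m V^T) *m (U *m Y *m V^T)^T = U *m (X *m Y^T) *m U^T.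
Proof.
move=> VV; rewrite !trmx_mul trmxK !mulmxA -(mulmxA _ V^T) VV mulmx1.
by rewrite -!mulmxA.
Qed.

Lemma prod_form2 m n (U : 'M[R]_m) (V : 'M[R]_n) (X Y : 'M[R]_(m,n)) :
  U^T *m U = 1%:M -> (U *m X *m V^T)^T *m (U *m Y *m V^T) = V *m (X^T *m Y) *m V^T.
Proof.
move=> UU; rewrite !trmx_mul trmxK !mulmxA -(mulmxA _ U^T) UU mulmx1.
by rewrite -!mulmxA.
Qed.

Lemma iii_to_cond m n k (A B : 'M[R]_(m,n)) : sign_change_sv k A B -> Cond A B.
Proof.
move=> [U [V [Sig [S [[UU VV [Soff Sdiag] Ae] [[Soffd Sd] _ _ Be]]]]]].
pose p := \row_i (1 + S i i); pose q := \row_i (1 - S i i).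
have Pe : 1%:M + S = diag_mx p.
  apply/matrixP => i j; rewrite !mxE; case: (eqVneq i j) => [->|ij].
    by rewrite mulr1n.
  by rewrite (Soffd i j) ?mulr0n ?addr0 //; exact/eqP.
have Me : 1%:M - S = diag_mx q.
  apply/matrixP => i j; rewrite !mxE; case: (eqVneq i j) => [->|ij].
    by rewrite mulr1n.
  by rewrite (Soffd i j) ?mulr0n ?oppr0 ?addr0 //; exact/eqP.
have ApB : A + B = U *m ((1%:M + S) *m Sig) *m V^T.
  by rewrite Ae Be mulmxDl mul1mx mulmxDr mulmxDl !mulmxA.
have AmB : A - B = U *m ((1%:M - S) *m Sig) *m V^T.
  by rewrite Ae Be mulmxBl mul1mx mulmxBr mulmxBl !mulmxA.
have pq i : p 0 i * q 0 i = 0.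
  by rewrite !mxE; case: (Sd i) => ->; ring.
split.
- rewrite ApB AmB prod_form1 //.
  suff -> : (1%:M + S) *m Sig *m ((1%:M - S) *m Sig)^T = 0 by rewrite mulmx0 mul0mx.
  rewrite trmx_mul Pe Me tr_diag_mx mulmxA -(mulmxA _ Sig).
  apply/matrixP => i j; rewrite mul_mx_diag mul_diag_mx !mxE.
  case: (eqVneq i j) => [->|ij].
    by case: (Sd j) => ->; ring.
  rewrite big1 ?mulr0 ?mul0r // => a _; rewrite !mxE.
  case: (eqVneq (i : nat) a) => [ia|ia]; last by rewrite (Soff i a) ?mul0r //; exact/eqP.
  rewrite (Soff j a) ?mulr0 // => ja; move: ij; rewrite -(inj_eq val_inj) /= ia ja eqxx.
  by [].
- rewrite ApB AmB prod_form2 //.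
  suff -> : ((1%:M + S) *m Sig)^T *m ((1%:M - S) *m Sig) = 0 by rewrite mulmx0 mul0mx.
  rewrite trmx_mul -mulmxA (mulmxA _ (1%:M - S)) Pe Me tr_diag_mx.
  have -> : diag_mx p *m diag_mx q = 0.
    apply/matrixP => i j; rewrite mul_diag_mx !mxE.
    case: (eqVneq i j) => [->|ij]; last by rewrite !mulr0n mulr0.
    by rewrite mulr1n -(pq j) !mxE.
  by rewrite mul0mx mulmx0.
Qed.

End III.

Lemma card_lt m k : (k <= m)%N -> #|[set i : 'I_m | (i < k)%N]| = k.
Proof.
move=> hk; have -> : [set i : 'I_m | (i < k)%N] = widen_ord hk @: [set: 'I_k].
  apply/setP => i; rewrite inE; apply/idP/imsetP.
    by move=> ik; exists (Ordinal ik); rewrite ?inE //; apply/val_inj.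
  by case=> j _ ->; rewrite /= ltn_ord.
rewrite card_imset ?cardsT ?card_ord // => a b /(congr1 val) /= ab; exact: val_inj.
Qed.

Lemma m1ne1 (R : realType) : (-1 : R) != 1.
Proof. by apply/eqP => h; lra. Qed.

Lemma EC_iii (R : realType) m n (A B E C : 'M[R]_(m,n)) :
  A = E + C -> B = E - C -> E *m C^T = 0 -> E^T *m C = 0 ->
  sign_change_sv (\rank (A - B)) A B.
Proof.
move=> hA hB EC ETC.
have [k [U1 [V1 [dc hC]]]] := svd C.
have [l [P1 [Q1 [de hE]]]] := svd E.
have D2 : A - B = 2%:R *: C by rewrite hA hB; apply/matrixP => i j; rewrite !mxE; ring.
have n20 : (2%:R : R) != 0 by rewrite pnatr_eq0.
have rkC := svd_rank hC.
have rk : \rank (A - B) = k by rewrite D2 mxrank_scale_nz // rkC.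
rewrite rk.
have CTE : C^T *m E = 0 by have := congr1 trmx ETC; rewrite trmx_mul trmxK trmx0.
have CET : C *m E^T = 0 by have := congr1 trmx EC; rewrite trmx_mul trmxK trmx0.
have CTP : C^T *m P1 = 0 := svd_orth_left hE CTE.
have PTU : P1^T *m U1 = 0.
  apply: (svd_orth_left hC); by have := congr1 trmx CTP; rewrite trmx_mul trmxK trmx0.
have UTP : U1^T *m P1 = 0 by have := congr1 trmx PTU; rewrite trmx_mul trmxK trmx0.
have CQ : C *m Q1 = 0 := svd_orth_left (svd_tr hE) CET.
have QTV : Q1^T *m V1 = 0.
  apply: (svd_orth_left (svd_tr hC)); by have := congr1 trmx CQ; rewrite trmx_mul trmx0.
have VTQ : V1^T *m Q1 = 0 by have := congr1 trmx QTV; rewrite trmx_mul trmxK trmx0.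
case: (hC) => UU1 VV1 dcpos Ce; case: (hE) => PP1 QQ1 depos Ee.
pose L := row_mx U1 P1; pose Rr := row_mx V1 Q1.
have LL : L^T *m L = 1%:M by apply: orth_row_mx.
have RR : Rr^T *m Rr = 1%:M by apply: orth_row_mx.
pose lam := row_mx dc de; pose lam' := row_mx (- dc) de.
have AE : A = L *m diag_mx lam *m Rr^T.
  rewrite /L /lam /Rr diag_mx_row mul_row_block !mulmx0 addr0 add0r tr_row_mx.
  by rewrite mul_row_col -Ce -Ee hA addrC.
have BE : B = L *m diag_mx lam' *m Rr^T.
  rewrite /L /lam' /Rr diag_mx_row mul_row_block !mulmx0 addr0 add0r tr_row_mx.
  rewrite mul_row_col -Ee hB addrC; congr (_ + _).
  have -> : diag_mx (- dc) = - diag_mx dc by apply/matrixP => i j; rewrite !mxE mulNrn.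
  by rewrite mulmxN mulNmx Ce.
have [U [UU UL]] := complete_orth LL.
have [V [VV VR]] := complete_orth RR.
have UUt : U *m U^T = 1%:M := mulmx1C UU.
have VVt : V *m V^T = 1%:M := mulmx1C VV.
have LE : L = U *m Jmx R m (k + l) by rewrite -UL mulmxA UUt mul1mx.
have RE : Rr = V *m Jmx R n (k + l) by rewrite -VR mulmxA VVt mul1mx.
pose Sig := Jmx R m (k + l) *m diag_mx lam *m (Jmx R n (k + l))^T.
pose S : 'M[R]_m := diag_mx (\row_i (if (i < k)%N then -1 else 1)).
have Sii i : S i i = if (i < k)%N then -1 else 1 by rewrite !mxE eqxx mulr1n.
have SigE i j : Sig i j = \sum_(a < k + l) (((i : nat) == a)%:R * lam 0 a * ((j : nat) == a)%:R).
  rewrite /Sig -mulmxA mxE; apply: eq_bigr => a _; rewrite mul_diag_mx !mxE.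
  by rewrite mulrA.
have km : (k <= m)%N by rewrite -rkC; exact: rank_leq_row.
have kn : (k <= n)%N by rewrite -rkC; exact: rank_leq_col.
have lampos a : 0 < lam 0 a.
  by rewrite /lam mxE; case: splitP => j _; [exact: dcpos | exact: depos].
have m1 : (-1 : R) != 1 := m1ne1 R.
exists U, V, Sig, S; split; first split => //.
- split => i j.
    move=> ij; rewrite SigE big1 // => a _.
    case: (eqVneq (i : nat) a) => [ia|ia]; last by rewrite /= mulr0n !mul0r.
    case: (eqVneq (j : nat) a) => [ja|ja]; last by rewrite /= mulr0n mulr0.
    by exfalso; apply: ij; rewrite ia ja.
  move=> _; rewrite SigE; apply: sumr_ge0 => a _.
  by rewrite mulr_ge0 ?mulr_ge0 ?ler0n ?ltW.
- by rewrite AE LE RE trmx_mul !mulmxA.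
split.
- split => [i j ij|i]; first by rewrite !mxE; case: eqVneq => //.
  by rewrite Sii; case: ifP => _; [right | left].
- have -> : [set i : 'I_m | S i i == -1] = [set i : 'I_m | (i < k)%N].
    apply/setP => i; rewrite !inE Sii; case: ifP => _; first by rewrite eqxx.
    by rewrite eq_sym (negbTE m1).
  exact: card_lt.
- move=> i; rewrite Sii; case: ifP => ik; last by move/eqP; rewrite eq_sym (negbTE m1).
  move=> _; have il : (i < n)%N := leq_trans ik kn.
  exists (Ordinal il) => //; rewrite SigE (bigD1 (lshift l (Ordinal ik))) //=.
  rewrite eqxx mulr1 mul1r ltr_wpDr //.
    by apply: sumr_ge0 => a _; rewrite mulr_ge0 ?mulr_ge0 ?ler0n ?ltW.
- rewrite BE LE RE trmx_mul !mulmxA; congr (_ *m _); rewrite -!mulmxA; congr (_ *m _).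
  rewrite !mulmxA; congr (_ *m _).
  apply/matrixP => i j; rewrite mul_diag_mx !mul_mx_diag !mxE.
  case: (eqVneq (i : nat) j) => [ij|ij]; last by rewrite /= !mulr0n !mulr0 !mul0r.
  rewrite /= !mulr1 ij; case: splitP => j' jE; rewrite ?mxE.
    by rewrite mul1r mulN1r.
  by [].
Qed.

Section Final.
Variable R : realType.
Variables m n : nat.
Implicit Types A B : 'M[R]_(m,n).

Lemma cond_EC A B : Cond A B -> exists E, exists C : 'M[R]_(m,n),
  [/\ A = E + C, B = E - C, E *m C^T = 0 & E^T *m C = 0].
Proof.
move=> [h1 h2]; exists (2%:R^-1 *: (A + B)), (2%:R^-1 *: (A - B)).
have n20 : (2%:R : R) != 0 by rewrite pnatr_eq0.
split.
- by apply/matrixP => i j; rewrite !mxE; field.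
- by apply/matrixP => i j; rewrite !mxE; field.
- by rewrite trZ -scalemxAl -scalemxAr h1 !scaler0.
- by rewrite trZ -scalemxAl -scalemxAr h2 !scaler0.
Qed.

Lemma cond_iv A B : Cond A B -> iv_prop A B (\rank (A - B)).
Proof. by move=> /cond_EC [E [C [hA hB h1 h2]]]; exact: EC_iv hA hB h1 h2. Qed.

Lemma cond_iii A B : Cond A B -> sign_change_sv (\rank (A - B)) A B.
Proof. by move=> /cond_EC [E [C [hA hB h1 h2]]]; exact: EC_iii hA hB h1 h2. Qed.

Lemma iv_v A B k : v_prop A B k -> iv_prop A^T B^T k.
Proof.
move=> [W [h1 h2 h3 h4]]; exists W; split => //.
- move=> i; have [s [v [s0 e1 e2 e3 e4]]] := h1 i; exists s, v; split => //.
  by rewrite trmxK.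
- by rewrite -trB.
- by move=> i; rewrite -trD.
Qed.

End Final.

Lemma cond_v (R : realType) m n (A B : 'M[R]_(m,n)) : Cond A B -> v_prop A B (\rank (A - B)).
Proof.
move=> /cond_tr/cond_iv; rewrite -trB mxrank_tr; exact: v_iv.
Qed.

Lemma v_cond (R : realType) m n (A B : 'M[R]_(m,n)) k : v_prop A B k -> Cond A B.
Proof. by move=> /iv_v /iv_to_cond /cond_tr. Qed.


Unset Implicit Arguments.

Theorem corollary3p10 (R : realType) (m n : nat) (A B : 'M[R]_(m, n)) :
  zero_one_mx A -> zero_one_mx B -> A <> B ->
  [<->
   (* (i) *)
   gram_mates A B /\ (A + B) *m (A - B)^T = 0;
   (* (ii) *)
   gram_mates A B /\ (A - B)^T *m (A + B) = 0;
   (* (iii) *)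
   sign_change_sv (\rank (A - B)) A B;
   (* (iv): the rows of W are v_1^T, ..., v_k^T *)
   exists W : 'M[R]_(\rank (A - B), n),
     [/\ (forall i, right_sing_vec_pos A (row i W)^T),
         row_free W, (W == A - B)%MS &
         (forall i, (A + B) *m (row i W)^T = 0)];
   (* (v): the rows of W are u_1^T, ..., u_k^T; Col(A-B) = Row((A-B)^T) *)
   exists W : 'M[R]_(\rank (A - B), m),
     [/\ (forall i, left_sing_vec_pos A (row i W)^T),
         row_free W, (W == (A - B)^T)%MS &
         (forall i, (A + B)^T *m (row i W)^T = 0)];
   (* (vi) *)
   gram_mates A B /\ (A *m (A - B)^T)^T = A *m (A - B)^T;
   (* (vii) *)
   gram_mates A B /\ (A^T *m (A - B))^T = A^T *m (A - B)].
Proof.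
move=> zA zB AB.
have trDT : (A^T - B^T)^T = A - B by rewrite trB !trmxK.
have i_c : gram_mates A B /\ (A + B) *m (A - B)^T = 0 -> Cond A B.
  by case=> g h; exact: i_to_cond.
have ii_c : gram_mates A B /\ (A - B)^T *m (A + B) = 0 -> Cond A B.
  case=> g h; apply/cond_tr; apply: i_to_cond; first by apply/gram_tr.
  by rewrite trDT -trD; have := congr1 trmx h; rewrite trmx_mul trmxK trmx0.
have vi_c : gram_mates A B /\ (A *m (A - B)^T)^T = A *m (A - B)^T -> Cond A B.
  by case=> g h; exact: vi_to_cond.
have vii_c : gram_mates A B /\ (A^T *m (A - B))^T = A^T *m (A - B) -> Cond A B.
  case=> g h; apply/cond_tr; apply: vi_to_cond; first by apply/gram_tr.
  by rewrite trDT.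
have c_g : Cond A B -> gram_mates A B by move=> c; exact: cond_to_gram.
split; [|split; [|split; [|split; [|split; [|split]]]]].
- move=> /i_c c; split; first exact: c_g.
  by case: c => _ h; have := congr1 trmx h; rewrite trmx_mul trmxK trmx0.
- by move=> /ii_c; exact: cond_iii.
- by move=> /iii_to_cond; exact: cond_iv.
- by move=> /iv_to_cond; exact: cond_v.
- move=> /v_cond c; split; first exact: c_g.
  exact: cond_to_vi.
- move=> /vi_c c; split; first exact: c_g.
  have := cond_to_vi (proj2 (cond_tr A B) c); rewrite trDT //.
- move=> /vii_c c; split; first exact: c_g.
  by case: c.
Qed.
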